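(* (a) If $\pi\in\mathfrak{S}_{2n+1}$ is a down-up permutation, then every inversion of $\pi$ is admissible, i.e. $\mathsf{adi}\,\pi=\mathsf{inv}\,\pi$. (b) For every $n\ge0$ and every $\pi\in\widetilde{\mathfrak{S}}_{2n+1,n}(213)$, $$\mathsf{adi}\,\pi+\mathsf{adi}\,\pi^r=2n^2+n,\qquad \mathsf{adi}\,\pi=2\cdot(3\text{-}12)\pi,\qquad \mathsf{adi}\,\pi^r=(31\text{-}2)\pi.$$
   Context: A permutation $\pi\in\mathfrak{S}_m$ is down-up if $\pi(1)>\pi(2)<\pi(3)>\pi(4)<\cdots$ (descents and ascents alternate, starting with a descent). $\pi^r=\pi(m)\cdots\pi(1)$ is the reverse. $\mathsf{inv}\,\pi=\#\{i<j:\pi(i)>\pi(j)\}$. Admissible inversions: set $\pi(m+1)=0$; an inversion pair $(\pi(i),\pi(j))$ ($1\le i<j\le m$, $\pi(i)>\pi(j)$) is admissible if $\pi(j)<\pi(j+1)$ or there is $l$ with $i<l<j$ and $\pi(l)<\pi(j)$; $\mathsf{adi}\,\pi$ counts them. $(3\text{-}12)\pi=\#\{(i,j):i<j<m,\ \pi(j)<\pi(j+1)<\pi(i)\}$; $(31\text{-}2)\pi=\#\{(i,j):i+1<j\le m,\ \pi(i+1)<\pi(j)<\pi(i)\}$. $\mathsf{des}\,\pi=\#\{i\in[m-1]:\pi(i)>\pi(i+1)\}$; $\mathsf{dd}\,\pi$ is the number of $i\in[m]$ with $\pi(i-1)>\pi(i)>\pi(i+1)$ under the boundary convention $\pi(0)=\pi(m+1)=0$.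 $\widetilde{\mathfrak{S}}_{m,k}(213)=\{\pi\in\mathfrak{S}_m:\pi\text{ avoids }213,\ \mathsf{dd}\,\pi=0,\ \mathsf{des}\,\pi=k\}$. *)

(* Defs.v *)
From mathcomp Require Import all_boot all_order all_fingroup.
Set Implicit Arguments. Unset Strict Implicit. Unset Printing Implicit Defensive.

(* A permutation pi of [m] = {1..m} is encoded by s : 'S_m (acting on {0..m-1})
   via pi(i) = s(i-1) + 1 for 1 <= i <= m.  We extend with the paper's boundary
   convention pi(0) = pi(m+1) = 0 (and 0 elsewhere outside [1,m]). *)
Definition pv (m : nat) (s : 'S_m) (i : nat) : nat :=
  match i with
  | 0 => 0
  | k.+1 => match @insub nat (fun x => x < m) 'I_m k with
            | Some j => (val (s j)).+1
            | None => 0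
            end
  end.

(* reverse: pi^r(i) = pi(m+1-i) *)
Definition revp (m : nat) (s : 'S_m) : 'S_m := (perm (@rev_ord_inj m) * s)%g.

Definition down_up (m : nat) (s : 'S_m) : bool :=
  [forall i : 'I_m, (0 < i) ==>
     (if odd i then pv s i > pv s i.+1 else pv s i < pv s i.+1)].

Definition invnum (m : nat) (s : 'S_m) : nat :=
  \sum_(1 <= i < m.+1) \sum_(i.+1 <= j < m.+1) (pv s j < pv s i).

Definition adi (m : nat) (s : 'S_m) : nat :=
  \sum_(1 <= i < m.+1) \sum_(i.+1 <= j < m.+1)
    ((pv s j < pv s i) &&
     ((pv s j < pv s j.+1) || has (fun l => pv s l < pv s j) (iota i.+1 (j - i.+1)))).

Definition pat3_12 (m : nat) (s : 'S_m) : nat :=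
  \sum_(1 <= i < m.+1) \sum_(i.+1 <= j < m)
    ((pv s j < pv s j.+1) && (pv s j.+1 < pv s i)).

Definition pat31_2 (m : nat) (s : 'S_m) : nat :=
  \sum_(1 <= i < m.+1) \sum_(i.+2 <= j < m.+1)
    ((pv s i.+1 < pv s j) && (pv s j < pv s i)).

Definition des (m : nat) (s : 'S_m) : nat :=
  \sum_(1 <= i < m) (pv s i.+1 < pv s i).

Definition dd (m : nat) (s : 'S_m) : nat :=
  \sum_(1 <= i < m.+1) ((pv s i < pv s i.-1) && (pv s i.+1 < pv s i)).

Definition avoids213 (m : nat) (s : 'S_m) : bool :=
  [forall i : 'I_m, forall j : 'I_m, forall k : 'I_m,
     ~~ [&& i < j, j < k, s j < s i & s i < s k]].

Definition tS213 (m k : nat) (s : 'S_m) : bool :=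
  [&& avoids213 s, dd s == 0 & des s == k].

(* Main.v *)
Require Import Defs.
From mathcomp Require Import all_boot all_order all_fingroup.
From mathcomp Require Import zify.
Set Implicit Arguments. Unset Strict Implicit.

Lemma pv_S m (s : 'S_m) k (hk : k < m) : pv s k.+1 = (s (Ordinal hk)).+1.
Proof. by rewrite /pv insubT /=; do 2 f_equal; apply: val_inj. Qed.

Lemma pv_gt m (s : 'S_m) i : m < i -> pv s i = 0.
Proof.
case: i => [//|k] hk; rewrite /pv insubF //=; apply/negbTE; rewrite -ltnNge; lia.
Qed.

Lemma pv_pos m (s : 'S_m) i : 0 < i <= m -> 0 < pv s i.
Proof. case: i => [//|k] /andP[_ hk]; by rewrite (pv_S s hk). Qed.

Lemma pv_inj m (s : 'S_m) i j : 0 < i <= m -> 0 < j <= m -> pv s i = pv s j -> i = j.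
Proof.
case: i => [//|i] /andP[_ hi]; case: j => [//|j] /andP[_ hj].
rewrite (pv_S s hi) (pv_S s hj) => [[]] /val_inj /perm_inj [] ->. by [].
Qed.

Lemma pv_rev m (s : 'S_m) i : 0 < i <= m -> pv (revp s) i = pv s (m.+1 - i).
Proof.
case: i => [//|k] /andP[_ hk]; rewrite (pv_S _ hk) /revp permM permE.
have hk' : m - k.+1 < m by lia.
have -> : m.+1 - k.+1 = (m - k.+1).+1 by lia.
rewrite (pv_S s hk'); do 2 f_equal; congr (s _); exact: val_inj.
Qed.

Lemma pair_sum a L (r t : nat -> nat) :
  (forall k, k < L -> r (a + 2*k) + r (a + 2*k).+1 = t (a + 2*k) + t (a + 2*k).+1) ->
  \sum_(a <= j < a + 2*L) r j = \sum_(a <= j < a + 2*L) t j.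
Proof.
elim: L => [|L IH] H; first by rewrite muln0 addn0 !big_geq.
have -> : a + 2 * L.+1 = (a + 2*L).+2 by lia.
rewrite !big_nat_recr /=; try lia.
rewrite -!addnA H // IH // => k hk; apply: H; lia.
Qed.

Lemma nocons_bound (d : nat -> bool) L a :
  (forall i, a <= i -> i.+1 < a + L -> ~~ (d i && d i.+1)) ->
  2 * \sum_(0 <= i < L) d (a + i) <= L.+1.
Proof.
elim/ltn_ind: L a => -[|L] IH a H; first by rewrite big_geq.
rewrite big_nat_recl //.
under eq_bigr => i _ do rewrite -addSnnS.
rewrite addn0; case da: (d a).
- case: L IH H => [|L] IH H; first by rewrite big_geq.
  rewrite big_nat_recl //.
  under eq_bigr => i _ do rewrite -addSnnS.
  have db : d a.+1 = false.
    apply/negbTE; have := H a (leqnn _); rewrite da /=; apply; lia.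
  rewrite addn0 db.
  have h2 := IH L (ltac:(lia)) a.+2 (fun i h1 h2 => H i (ltac:(lia)) (ltac:(lia))).
  lia.
- have h2 := IH L (ltac:(lia)) a.+1 (fun i h1 h2 => H i (ltac:(lia)) (ltac:(lia))).
  lia.
Qed.

Lemma sum_term a b i (F : nat -> nat) : a <= i < b -> F i <= \sum_(a <= j < b) F j.
Proof.
move=> /andP[h1 h2]; rewrite (@big_cat_nat _ _ _ i) //= ?big_nat_recl //; last exact: ltnW.
case: b h2 => // b h2; rewrite big_nat_recl //; lia.
Qed.

Lemma tot_eq m : 2 * \sum_(1 <= i < m.+1) (m - i) + m = m * m.
Proof.
elim: m => [|m IH]; first by rewrite big_geq.
rewrite big_nat_recr //= subnn addn0.
rewrite (eq_big_nat _ _ (F2 := fun i => (m - i) + 1)); last by move=> i hi; lia.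
rewrite big_split /= sum_nat_const_nat. nia.
Qed.

Lemma sum_shift a b (F : nat -> nat) :
  \sum_(a <= i < b) F i = \sum_(0 <= i < b - a) F (a + i).
Proof. rewrite -{1}(add0n a) big_addn; apply: eq_bigr => i _; by rewrite addnC. Qed.

Lemma alt_force (d : nat -> bool) n :
  (forall i, 1 <= i -> i.+1 <= 2*n -> ~~(d i && d i.+1)) -> d (2*n) = false ->
  \sum_(1 <= i < (2*n).+1) d i = n -> forall j, 1 <= j <= 2*n -> d j = odd j.
Proof.
move=> Hnc Hlast Hsum j hj.
pose B a b := \sum_(a <= i < b) d i.
have Bcat : forall a c b, a <= c -> c <= b -> B a b = B a c + B c b.
  by move=> a c b h1 h2; rewrite /B (@big_cat_nat _ _ _ c).
have B1 : forall a, B a a.+1 = d a by move=> a; rewrite /B big_nat1.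
have Bb : forall a b, 1 <= a -> a <= b -> b <= (2*n).+1 -> 2 * B a b <= b - a + 1.
  move=> a b h1 h2 h3; rewrite /B sum_shift.
  have := @nocons_bound d (b - a) a; rewrite addn1; apply.
  move=> i hi1 hi2; apply: Hnc; lia.
have Hs : B 1 (2*n).+1 = n by [].
have Hodd := odd_double_half j.
case oj: (odd j); case dj: (d j) => //; exfalso; rewrite oj in Hodd.
- have e1 := Bcat 1 j (2*n).+1 (ltac:(lia)) (ltac:(lia)).
  have e2 := Bcat j j.+1 (2*n).+1 (ltac:(lia)) (ltac:(lia)).
  have e3 := Bcat j.+1 (2*n) (2*n).+1 (ltac:(lia)) (ltac:(lia)).
  have b1 := Bb 1 j (leqnn _) (ltac:(lia)) (ltac:(lia)).
  have b2 := Bb j.+1 (2*n) (ltac:(lia)) (ltac:(lia)) (ltac:(lia)).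
  rewrite !B1 dj Hlast in e1 e2 e3; lia.
- have hj2 : j.+1 <= 2*n.
    case: (ltnP j (2*n)) => // hh; have ej : j = 2*n by lia.
    by rewrite -ej dj in Hlast.
  have hjm : 1 <= j.-1 by lia.
  have dm : d j.-1 = false.
    apply/negbTE; have := Hnc j.-1 hjm (ltac:(lia)).
    have -> : j.-1.+1 = j by lia. by rewrite dj andbT.
  have dp : d j.+1 = false.
    by apply/negbTE; have := Hnc j (ltac:(lia)) hj2; rewrite dj.
  have e1 := Bcat 1 j.-1 (2*n).+1 (ltac:(lia)) (ltac:(lia)).
  have e2 := Bcat j.-1 j.-1.+1 (2*n).+1 (ltac:(lia)) (ltac:(lia)).
  have e3 := Bcat j j.+1 (2*n).+1 (ltac:(lia)) (ltac:(lia)).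
  have e4 := Bcat j.+1 j.+2 (2*n).+1 (ltac:(lia)) (ltac:(lia)).
  have e5 := Bcat j.+2 (2*n) (2*n).+1 (ltac:(lia)) (ltac:(lia)).
  have b1 := Bb 1 j.-1 (leqnn _) (ltac:(lia)) (ltac:(lia)).
  have b2 := Bb j.+2 (2*n) (ltac:(lia)) (ltac:(lia)) (ltac:(lia)).
  have ej : j.-1.+1 = j by lia.
  rewrite !B1 in e1 e2 e3 e4 e5; rewrite ej in e2 e3.
  rewrite dj dm dp Hlast in e1 e2 e3 e4 e5; lia.
Qed.

Definition DU (f : nat -> nat) m := forall i, 0 < i < m ->
  (if odd i then f i.+1 < f i else f i < f i.+1).

Definition invG (f : nat -> nat) m : nat :=
  \sum_(1 <= i < m.+1) \sum_(i.+1 <= j < m.+1) (f j < f i).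

Definition adiF (f : nat -> nat) m : nat :=
  \sum_(1 <= i < m.+1) \sum_(i.+1 <= j < m.+1)
    ((f j < f i) &&
     ((f j < f j.+1) || has (fun l => f l < f j) (iota i.+1 (j - i.+1)))).

Lemma partA f m : odd m -> DU f m -> adiF f m = invG f m.
Proof.
move=> om H; apply: eq_big_nat => i hi; apply: eq_big_nat => j hj.
case: (ltnP (f j) (f i)) => h //=.
suff hh : (f j < f j.+1) || has (fun l => f l < f j) (iota i.+1 (j - i.+1)) by rewrite hh.
case oj: (odd j).
- have hj1 : 0 < j.-1 < m by lia.
  have := H _ hj1.
  have ej : j.-1.+1 = j by lia.
  have oj1 : odd j.-1 = false by move: oj; rewrite -{1}ej /= => /negbTE.
  rewrite oj1 ej => hlt.
  case: (ltnP i j.-1) => hij.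
  + apply/orP; right; apply/hasP; exists j.-1 => //; rewrite mem_iota; lia.
  + have eij : i = j.-1 by lia.
    by rewrite eij in h; move: (ltn_trans h hlt); rewrite ltnn.
- have hj1 : 0 < j < m.
    have : j != m by apply/eqP => e; rewrite e om in oj.
    lia.
  by have := H _ hj1; rewrite oj => ->.
Qed.

Lemma oddE i : odd i -> i = 2 * i./2 + 1.
Proof. move=> h; have:= odd_double_half i; rewrite h; lia. Qed.
Lemma evenE i : ~~ odd i -> i = 2 * i./2.
Proof. move=> /negbTE h; have:= odd_double_half i; rewrite h; lia. Qed.
Lemma odd2 q : odd (2 * q) = false.
Proof. by rewrite oddM. Qed.
Lemma odd21 q : odd (2 * q + 1).
Proof. by rewrite oddD oddM. Qed.

Lemma ltn_neq_inj (f : nat -> nat) a b : f a != f b -> f a <= f b -> f a < f b.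
Proof. by rewrite ltn_neqAle => -> ->. Qed.

Definition INJ (f : nat -> nat) m := forall i j, 0 < i <= m -> 0 < j <= m -> f i = f j -> i = j.
Definition A213 (f : nat -> nat) m := forall i j k, 0 < i -> i < j -> j < k -> k <= m ->
  ~~ ((f j < f i) && (f i < f k)).

Lemma F1 f m : DU f m -> A213 f m -> INJ f m ->
  forall i j, odd i -> 0 < i -> i < j -> j <= m -> f j < f i.
Proof.
move=> Hdu H2 Hi i j oi i0 ij jm.
have hd := Hdu i (ltac:(lia)); rewrite oi in hd.
case: (ltnP i.+1 j) => hj; last by have -> : j = i.+1 by lia.
have := H2 i i.+1 j i0 (ltnSn _) hj jm; rewrite hd /= -leqNgt => hle.
rewrite ltn_neqAle hle andbT; apply/eqP => e; have := Hi _ _ _ _ e; lia.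
Qed.

Lemma pairfact f m : DU f m -> A213 f m -> INJ f m ->
  forall i j, 0 < i -> ~~ odd j -> i < j -> j < m -> (f j < f i) = (f j.+1 < f i).
Proof.
move=> Hdu H2 Hi i j i0 oj ij jm.
have hd := Hdu j (ltac:(lia)); rewrite (negbTE oj) in hd.
apply/idP/idP => h; last exact: ltn_trans hd h.
have := H2 i j j.+1 i0 ij (ltnSn _) jm; rewrite h /= -leqNgt => hle.
rewrite ltn_neqAle hle andbT; apply/eqP => e; have := Hi _ _ _ _ e; lia.
Qed.

Lemma oddasc f m : DU f m -> f m.+1 = 0 -> forall j, odd j -> 0 < j <= m -> (f j < f j.+1) = false.
Proof.
move=> Hdu He j oj hj; case: (ltnP j m) => h.
- have := Hdu j (ltac:(lia)); rewrite oj => hd; apply/negbTE; rewrite -leqNgt; exact: ltnW.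
- have -> : j = m by lia. by rewrite He ltn0.
Qed.

Definition Rrow (f : nat -> nat) m i := \sum_(i.+1 <= j < m.+1) (f j < f i).
Definition Trow (f : nat -> nat) m i := \sum_(i.+1 <= j < m) ((f j < f j.+1) && (f j.+1 < f i)).
Definition Prow (f : nat -> nat) m i := \sum_(i.+2 <= j < m.+1) ((f i.+1 < f j) && (f j < f i)).

Lemma row2_aux f m : odd m -> DU f m -> A213 f m -> INJ f m -> f m.+1 = 0 ->
  forall i a L, 0 < i -> i < a -> ~~ odd a -> a + 2 * L = m.+1 ->
  \sum_(a <= j < a + 2 * L) (f j < f i) =
  2 * \sum_(a <= j < a + 2 * L) ((f j < f j.+1) && (f j.+1 < f i)).
Proof.
move=> om Hdu H2 Hi He i a L i0 ia oa aL.
rewrite big_distrr /=; apply: pair_sum => k hk.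
have oj : ~~ odd (a + 2 * k) by rewrite oddD odd2 addbF.
have jm : a + 2 * k < m by lia.
rewrite (oddasc Hdu He (j := (a + 2*k).+1)) /=; [|by rewrite oj| lia].
have hd := Hdu (a + 2 * k) (ltac:(lia)); rewrite (negbTE oj) in hd.
rewrite hd /= (pairfact Hdu H2 Hi i0 oj) //; try lia.
Qed.

Lemma row2 f m : odd m -> DU f m -> A213 f m -> INJ f m -> f m.+1 = 0 ->
  forall i, 0 < i <= m -> Rrow f m i = 2 * Trow f m i.
Proof.
move=> om Hdu H2 Hi He i hi.
have -> : Trow f m i = \sum_(i.+1 <= j < m.+1) ((f j < f j.+1) && (f j.+1 < f i)).
  rewrite /Trow; case: (ltnP i m) => h.
  - by rewrite big_nat_recr //= He ltn0 addn0.
  - by rewrite !big_geq //; lia.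
rewrite /Rrow.
have hm := oddE om.
case oi: (odd i).
- have hi2 := oddE oi.
  have e : m.+1 = i.+1 + 2 * (m./2 - i./2) by lia.
  rewrite e; apply: (row2_aux om Hdu H2 Hi He).
  + by case/andP: hi.
  + exact: ltnSn.
  + by rewrite /= oi.
  + by rewrite -e.
- have hi2 := evenE (negbT oi).
  have him : i < m by lia.
  have e : m.+1 = i.+2 + 2 * (m./2 - i./2) by lia.
  have h2 : i.+2 <= m.+1 by lia.
  have h3 : 0 < i < m by lia.
  have h4 : 0 < i.+1 <= m by lia.
  rewrite (@big_cat_nat _ _ _ i.+2 i.+1 m.+1) // (@big_cat_nat _ _ _ i.+2 i.+1 m.+1) //= !big_nat1.
  have hd := Hdu i h3; rewrite oi in hd.
  rewrite ltnNge (ltnW hd) /= (oddasc Hdu He (j := i.+1)) /=; [|by rewrite oi|exact h4].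
  rewrite e; apply: (row2_aux om Hdu H2 Hi He).
  + by case/andP: hi.
  + by [].
  + by rewrite /= oi.
  + by rewrite -e.
Qed.

Lemma row3 f m : odd m -> DU f m -> A213 f m -> INJ f m -> f m.+1 = 0 ->
  \sum_(1 <= i < m.+1) (Prow f m i + Rrow f m i) = \sum_(1 <= i < m.+1) (m - i).
Proof.
move=> om Hdu H2 Hi He.
have hm := oddE om.
have e : m = 1 + 2 * m./2 by lia.
rewrite (@big_nat_recr _ _ _ m 1 (fun i => m - i)) ?(@big_nat_recr _ _ _ m 1 (fun i => Prow f m i + Rrow f m i)) /=; try lia.
have -> : Prow f m m = 0 by rewrite /Prow big_geq.
have -> : Rrow f m m = 0 by rewrite /Rrow big_geq.
rewrite subnn !addn0.
have ee : forall F : nat -> nat, \sum_(1 <= i < m) F i = \sum_(1 <= i < 1 + 2*m./2) F i by move=> F; rewrite -e.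
rewrite !ee; apply: pair_sum => k hk.
set i := 1 + 2 * k.
have oi : odd i by rewrite /i oddD oddM.
have im : i.+1 < m by lia.
have R1 : Rrow f m i = m - i.
  rewrite /Rrow (eq_big_nat _ _ (F2 := fun _ => 1)); first by rewrite sum_nat_const_nat; lia.
  move=> j hj; rewrite (F1 Hdu H2 Hi oi); lia.
have P1 : Prow f m i.+1 = 0.
  rewrite /Prow (eq_big_nat _ _ (F2 := fun _ => 0)); first by rewrite sum_nat_const_nat muln0.
  move=> j hj.
  have hd := Hdu i.+1 (ltac:(lia)); rewrite oddS oi /= in hd.
  case: (ltnP (f i.+2) (f j)) => //= h; by rewrite ltnNge (ltnW (ltn_trans hd h)).
have P2 : Prow f m i + Rrow f m i.+1 = m - i.+1.
  rewrite /Prow /Rrow -big_split /= (eq_big_nat _ _ (F2 := fun _ => 1)).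
    by rewrite sum_nat_const_nat; lia.
  move=> j hj.
  have a1 : 0 < i by lia. have a2 : i < j by lia. have a3 : j <= m by lia.
  rewrite (F1 Hdu H2 Hi oi a1 a2 a3) andbT.
  have : f i.+1 != f j by apply/eqP => eq0; have := Hi _ _ _ _ eq0; lia.
  case: ltngtP => //.
rewrite -/i in R1 P1 P2 *.
lia.
Qed.

Lemma inner_full m i (G : nat -> bool) : i <= m ->
  \sum_(1 <= j < m.+1) ((i < j) && G j) = \sum_(i.+1 <= j < m.+1) G j.
Proof.
move=> im; rewrite (@big_cat_nat _ _ _ i.+1) //=.
rewrite (eq_big_nat _ _ (F2 := fun _ => 0)); last first.
  by move=> j hj; have -> : (i < j) = false by lia.
rewrite sum_nat_const_nat muln0 add0n; apply: eq_big_nat => j hj.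
by have -> : (i < j) = true by lia.
Qed.

Lemma invF_full (f : nat -> nat) (m : nat) : invG f m =
  \sum_(1 <= i < m.+1) \sum_(1 <= j < m.+1) ((i < j) && (f j < f i)).
Proof.
apply: eq_big_nat => i hi; rewrite inner_full //; lia.
Qed.

Lemma rev_sum (f g : nat -> nat) m : INJ f m ->
  (forall i, 0 < i <= m -> g i = f (m.+1 - i)) ->
  invG f m + invG g m = \sum_(1 <= i < m.+1) (m - i).
Proof.
move=> Hi Hg.
rewrite !invF_full.
have -> : \sum_(1 <= i < m.+1) \sum_(1 <= j < m.+1) ((i < j) && (g j < g i)) =
          \sum_(1 <= i < m.+1) \sum_(1 <= j < m.+1) ((j < i) && (f j < f i)).
  rewrite big_nat_rev; apply: eq_big_nat => i hi.
  rewrite big_nat_rev; apply: eq_big_nat => j hj.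
  have -> : 1 + m.+1 - i.+1 < 1 + m.+1 - j.+1 = (j < i) by lia.
  rewrite !Hg; try lia.
  have -> : m.+1 - (1 + m.+1 - j.+1) = j by lia.
  by have -> : m.+1 - (1 + m.+1 - i.+1) = i by lia.
rewrite [X in _ + X]exchange_big_nat -big_split /=.
apply: eq_big_nat => i hi.
rewrite -big_split /=.
rewrite (eq_big_nat _ _ (F2 := fun j => nat_of_bool ((i < j) && true))).
  rewrite inner_full; last lia.
  by rewrite sum_nat_const_nat muln1; lia.
move=> j hj; case: (ltnP i j) => h //=.
have : f i != f j by apply/eqP => e; have := Hi _ _ _ _ e; lia.
by case: ltngtP.
Qed.

Lemma DU_rev (f g : nat -> nat) m : odd m -> DU f m -> (forall i, 0 < i <= m -> g i = f (m.+1 - i)) -> DU g m.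
Proof.
move=> om Hdu Hg i hi.
rewrite !Hg; try lia.
have e1 : m.+1 - i = (m - i).+1 by lia.
have e2 : m.+1 - i.+1 = m - i by lia.
rewrite e1 e2.
have := Hdu (m - i) (ltac:(lia)).
rewrite oddB; last lia.
rewrite om; case: (odd i) => //=.
Qed.

Lemma DU_force (f : nat -> nat) n : INJ f (2*n+1) -> 0 < f (2*n+1) -> f (2*n+1).+1 = 0 ->
  (forall i, 0 < i <= 2*n+1 -> ~~ ((f i < f i.-1) && (f i.+1 < f i))) ->
  \sum_(1 <= i < 2*n+1) (f i.+1 < f i) = n -> DU f (2*n+1).
Proof.
move=> Hi Hp He Hdd Hdes i hi.
have Hnc : forall k, 1 <= k -> k.+1 <= 2*n -> ~~ ((f k.+1 < f k) && (f k.+2 < f k.+1)).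
  move=> k h1 h2; have := Hdd k.+1 (ltac:(lia)); done.
have Hlast : (f (2*n).+1 < f (2*n)) = false.
  have := Hdd (2*n+1) (ltac:(lia)); rewrite He Hp andbT.
  have -> : (2*n+1).-1 = 2*n by lia.
  rewrite addn1; exact: negbTE.
have Hs : \sum_(1 <= k < (2*n).+1) (f k.+1 < f k) = n by rewrite addn1 in Hdes.
have := alt_force (d := fun k => f k.+1 < f k) Hnc Hlast Hs (j := i) (ltac:(lia)).
case: (odd i) => // /negbT; rewrite -leqNgt => hle.
rewrite ltn_neqAle hle andbT; apply/eqP => e; have := Hi _ _ _ _ e; lia.
Qed.

Lemma du_conv m (s : 'S_m) : down_up s -> DU (pv s) m.
Proof.
move=> /forallP H i /andP[h0 hm]; have := H (Ordinal hm); by rewrite /= h0.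
Qed.

Lemma inj_conv m (s : 'S_m) : INJ (pv s) m.
Proof. move=> i j hi hj; exact: pv_inj. Qed.

Lemma a213_conv m (s : 'S_m) : avoids213 s -> A213 (pv s) m.
Proof.
move=> /forallP H [//|i] [//|j] [//|k] _ hij hjk hk.
have hi : i < m by lia. have hj : j < m by lia. have hk' : k < m by lia.
rewrite (pv_S s hi) (pv_S s hj) (pv_S s hk') !ltnS.
have := H (Ordinal hi); move/forallP => /(_ (Ordinal hj)); move/forallP => /(_ (Ordinal hk')).
move=> /negP hh; apply/negP => /andP[h1 h2]; apply: hh.
apply/and4P; split => //=; lia.
Qed.

Lemma dd_conv m (s : 'S_m) : dd s = 0 ->
  forall i, 0 < i <= m -> ~~ ((pv s i < pv s i.-1) && (pv s i.+1 < pv s i)).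
Proof.
move=> H i hi; apply/negP => hh.
have := @sum_term 1 m.+1 i (fun i => (pv s i < pv s i.-1) && (pv s i.+1 < pv s i)) (ltac:(lia)).
by rewrite /= hh -/(dd s) H.
Qed.

Theorem lemma3p9 :
  (forall (n : nat) (s : 'S_(2 * n + 1)), down_up s -> adi s = invnum s) /\
  (forall (n : nat) (s : 'S_(2 * n + 1)), tS213 n s ->
     [/\ adi s + adi (revp s) = 2 * n ^ 2 + n,
         adi s = 2 * pat3_12 s
       & adi (revp s) = pat31_2 s]).
Proof.
split.
  move=> n s hdu.
  exact: (partA (odd21 n) (du_conv hdu)).
move=> n s /and3P[ha /eqP hdd /eqP hdes].
set m := 2 * n + 1.
have om : odd m := odd21 n.
have Hi := inj_conv (s:=s).
have H2 := a213_conv ha.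
have He : pv s m.+1 = 0 by apply: pv_gt.
have Hp : 0 < pv s m by apply: pv_pos; lia.
have Hdu : DU (pv s) m.
  apply: DU_force => //; exact: dd_conv.
have Hg : forall i, 0 < i <= m -> pv (revp s) i = pv s (m.+1 - i) by move=> i; exact: pv_rev.
have Hdug := DU_rev om Hdu Hg.
have A1 : adi s = invG (pv s) m := partA om Hdu.
have A2 : adi (revp s) = invG (pv (revp s)) m := partA om Hdug.
have Rv := rev_sum Hi Hg.
have Tt := tot_eq m.
have R3 := row3 om Hdu H2 Hi He.
rewrite big_split /= in R3.
have P3 : pat31_2 s = \sum_(1 <= i < m.+1) Prow (pv s) m i by [].
have I3 : invG (pv s) m = \sum_(1 <= i < m.+1) Rrow (pv s) m i by [].
split.
- rewrite A1 A2 Rv. rewrite /m in Tt *. nia.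
- rewrite A1 I3 /pat3_12 big_distrr /=; apply: eq_big_nat => i hi.
  apply: (row2 om Hdu H2 Hi He); lia.
- rewrite A2 P3; rewrite -I3 in R3. move: R3 Rv; rewrite /m; lia.
Qed.
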